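(* Let $M$ be an ACI-matrix over a field $\mathbb{F}$. Then: (i) $M$ has a factor set if and only if $M$ is not FmR. (ii) $M$ has a semifactor set if and only if $M$ is FmR.
   Context: Let $\mathbb{F}$ be a field. An ACI-matrix is a matrix with entries in $\mathbb{F}[x_1,\dots,x_k]$ whose entries are polynomials of degree at most one and such that no indeterminate appears in two different columns. A completion is an assignment of values in $\mathbb{F}$ to all indeterminates; $\mathrm{maxRank}(M)$ is the maximum rank of a completion. Wide/tall/square mean more columns than rows / more rows than columns / equal. ACI-matrices of size $0\times q$ ($q>0$, wide degenerate), $p\times 0$ ($p>0$, tall degenerate) and $0\times 0$ (void) are allowed, also as blocks. $N$ is FRmR if $\mathrm{maxRank}(N)=\mathrm{rows}(N)$, FCmR if $\mathrm{maxRank}(N)=\mathrm{cols}(N)$, FmR if $\mathrm{maxRank}(N)=\min\{\mathrm{rows}(N),\mathrm{cols}(N)\}$; by convention tall degenerate is FRmR, wide degenerate is FCmR, void is both. For an $m\times n$ block matrix $\begin{bmatrix} A & B\\ 0 & C\end{bmatrix}$ with lower-left $r\times s$ zero block, the zero block is Big if $r+s>\max\{m,n\}$, Medium if $r+s=\max\{m,n\}$. For $F=\{f_1<\dots<f_s\}\subseteq\{1,\dots,n\}$ with complement $\{g_1<\dots<g_{n-s}\}$, let $Q_F$ be the $n\times n$ permutation matrix such that, for any $m\times n$ $M$, $MQ_F$ has as columns $f_1,\dots,f_s,g_1,\dots,g_{n-s}$ of $M$ in that order. $F$ is a factor set of $M$ if there is a nonsingular constant $m\times m$ matrix $R$ with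 $RMQ_F=\begin{bmatrix} A & B\\ 0 & C\end{bmatrix}$, where $A$ has $\#F$ columns, the zero block is Big, $A$ is FRmR and $C$ is FCmR. $F$ is a semifactor set of $M$ if the same holds with the zero block Medium instead of Big. *)

(* Defs.v *)
From mathcomp Require Import all_boot all_algebra.
From mathcomp Require Import boolp.
Set Implicit Arguments. Unset Strict Implicit. Unset Printing Implicit Defensive.
Import GRing.Theory.
Local Open Scope ring_scope.

(* An m x n matrix over F[x_1,...,x_k] whose entries have degree at most one:
   entry (i,j) is  acst i j + \sum_t acoef t i j * x_t. *)
Record affmx (F : fieldType) (k m n : nat) := AffMx {
  acst : 'M[F]_(m, n);
  acoef : 'I_k -> 'M[F]_(m, n) }.

Section Defs.
Variables (F : fieldType) (k : nat).

Definition is_aci m n (M : affmx F k m n) : Prop :=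
  forall (t : 'I_k) (i1 i2 : 'I_m) (j1 j2 : 'I_n),
    acoef M t i1 j1 != 0 -> acoef M t i2 j2 != 0 -> j1 = j2.

Definition completion m n (M : affmx F k m n) (v : 'I_k -> F) : 'M[F]_(m, n) :=
  acst M + \sum_(t < k) v t *: acoef M t.

Definition maxRank m n (M : affmx F k m n) : nat :=
  \max_(r < (minn m n).+1 | `[< exists v, \rank (completion M v) = r >]) r.

Definition FRmR m n (M : affmx F k m n) : Prop := maxRank M = m.
Definition FCmR m n (M : affmx F k m n) : Prop := maxRank M = n.
Definition FmR m n (M : affmx F k m n) : Prop := maxRank M = minn m n.

Definition affmulmx_l m m' n (R : 'M[F]_(m', m)) (M : affmx F k m n)
  : affmx F k m' n := AffMx (R *m acst M) (fun t => R *m acoef M t).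
Definition affmulmx_r m n n' (M : affmx F k m n) (Q : 'M[F]_(n, n'))
  : affmx F k m n' := AffMx (acst M *m Q) (fun t => acoef M t *m Q).

Definition affsub m n (Rw : {set 'I_m}) (Cl : {set 'I_n}) (M : affmx F k m n)
  : affmx F k #|Rw| #|Cl| :=
  AffMx (\matrix_(i, j) acst M (enum_val i) (enum_val j))
        (fun t => \matrix_(i, j) acoef M t (enum_val i) (enum_val j)).

(* Q_F : the column of M Q_F at position p is column colidx S p of M,
   where the columns are listed as f_1 < ... < f_s, g_1 < ... < g_(n-s). *)
Definition colidx n (S : {set 'I_n}) (p : 'I_n) : 'I_n :=
  nth p (enum S ++ enum (~: S)) p.
Definition QF n (S : {set 'I_n}) : 'M[F]_n :=
  \matrix_(i, p) (i == colidx S p)%:R.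

Definition zero_entry m n (M : affmx F k m n) i j : Prop :=
  acst M i j = 0 /\ forall t, acoef M t i j = 0.

(* R M Q_S = [A B; 0 C] with A having #|S| columns, the zero block being
   r x #|S| satisfying cond r #|S|, A FRmR and C FCmR *)
Definition block_decomp (cond : nat -> nat -> Prop) m n
    (M : affmx F k m n) (S : {set 'I_n}) : Prop :=
  exists R : 'M[F]_m, R \in unitmx /\
    let M' := affmulmx_r (affmulmx_l R M) (QF S) in
    exists r : nat, (r <= m)%N /\ cond r #|S| /\
      (forall (i : 'I_m) (p : 'I_n), (m - r <= i)%N -> (p < #|S|)%N ->
          zero_entry M' i p) /\
      FRmR (affsub [set i : 'I_m | (i < m - r)%N] [set p : 'I_n | (p < #|S|)%N] M') /\
      FCmR (affsub [set i : 'I_m | (m - r <= i)%N] [set p : 'I_n | (#|S| <= p)%N] M').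

Definition factor_set m n (M : affmx F k m n) (S : {set 'I_n}) : Prop :=
  block_decomp (fun r s => (maxn m n < r + s)%N) M S.
Definition semifactor_set m n (M : affmx F k m n) (S : {set 'I_n}) : Prop :=
  block_decomp (fun r s => (r + s)%N = maxn m n) M S.

End Defs.

(* Main.v *)
Require Import Defs.
From mathcomp Require Import all_boot all_algebra.
From mathcomp Require Import boolp.
From mathcomp Require Import zify.
Set Implicit Arguments. Unset Strict Implicit. Unset Printing Implicit Defensive.
Import GRing.Theory.
Local Open Scope ring_scope.
Section Rado.
Variables (F : fieldType) (m k : nat) (I : finType).
Variables (c : I -> 'rV[F]_m) (B : I -> 'M[F]_(k, m)).

Definition Sp j : 'M[F]_m := <<col_mx (c j) (B j)>>%MS.
Definition Span (J : {set I}) : 'M[F]_m := (\sum_(j in J) Sp j)%MS.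
Definition xv (a : I -> 'rV[F]_k) j : 'rV[F]_m := c j + a j *m B j.
Definition Xs a (J : {set I}) : 'M[F]_m := (\sum_(j in J) <<xv a j>>)%MS.

Lemma xv_Sp a j : (<<xv a j>> <= Sp j)%MS.
Proof.
rewrite genmxE /Sp genmxE /xv; apply: addmx_sub.
  by rewrite -addsmxE addsmxSl.
by apply: submx_trans (submxMl _ _) _; rewrite -addsmxE addsmxSr.
Qed.

Lemma Sp_notsub j (W : 'M[F]_m) : ~~ (Sp j <= W)%MS ->
  exists a, ~~ (<<xv a j>> <= W)%MS.
Proof.
move=> nS; case: (boolP (c j <= W)%MS) => Hc; last first.
  by exists (fun _ => 0); rewrite genmxE /xv mul0mx addr0.
have : ~~ (B j <= W)%MS.
  apply: contra nS => HB; rewrite /Sp genmxE -addsmxE addsmx_sub Hc HB.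
  by [].
case/row_subPn => t Ht; exists (fun _ => delta_mx 0 t); rewrite genmxE /xv.
apply: contra Ht => H; rewrite rowE.
have -> : delta_mx 0 t *m B j = (c j + delta_mx 0 t *m B j) - c j by rewrite addrC addKr.
by rewrite addmx_sub // eqmx_opp.
Qed.


Local Close Scope ring_scope.

Lemma Xs_sub a a' (J J' : {set I}) : J \subset J' ->
  (forall j, j \in J -> a j = a' j) -> (Xs a J <= Xs a' J')%MS.
Proof.
move=> sJ ha; apply/sumsmx_subP => j hj.
by rewrite /xv ha // (sumsmx_sup j) // (subsetP sJ).
Qed.

Lemma Span_sub (J J' : {set I}) : J \subset J' -> (Span J <= Span J')%MS.
Proof.
by move=> sJ; apply/sumsmx_subP => j hj; rewrite (sumsmx_sup j) // (subsetP sJ).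
Qed.

Lemma Xs_Span a J : (Xs a J <= Span J)%MS.
Proof. by apply/sumsmx_subP => j hj; rewrite (sumsmx_sup j) // xv_Sp. Qed.

Lemma Span_U (J1 J2 : {set I}) : (Span (J1 :|: J2) <= Span J1 + Span J2)%MS.
Proof.
apply/sumsmx_subP => j; rewrite inE => /orP [] hj.
  by apply: submx_trans (addsmxSl _ _); rewrite (sumsmx_sup j).
by apply: submx_trans (addsmxSr _ _); rewrite (sumsmx_sup j).
Qed.

Lemma rank_addsl (W : 'M[F]_m) p (X : 'M[F]_(p, m)) : \rank W <= \rank (W + X)%MS.
Proof. by rewrite mxrankS // addsmxSl. Qed.

Lemma rado_ind N : forall (J : {set I}), #|J| < N -> forall (W : 'M[F]_m) (d : nat),
  (forall J' : {set I}, J' \subset J -> \rank W + #|J'| <= \rank (W + Span J')%MS + d) ->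
  exists a, \rank W + #|J| <= \rank (W + Xs a J)%MS + d.
Proof.
elim: N => // N IH J ltJN W d H.
case: (eqVneq J set0) => [-> | nJ0].
  by exists (fun _ => 0%R); rewrite cards0 addn0; apply: leq_trans (rank_addsl _ _) (leq_addr _ _).
case: (boolP [exists J' : {set I}, [&& J' \subset J, J' != set0, J' != J &
     \rank (W + Span J')%MS + d <= \rank W + #|J'|]]).
  case/existsP => J' /and4P [sJ' nJ'0 nJ'J tight].
  have ltJ' : #|J'| < #|J| by apply: proper_card; rewrite properEneq nJ'J.
  have [a1 Ha1] := IH J' (leq_trans ltJ' (ltnSE ltJN)) W d
     (fun J'' s => H J'' (subset_trans s sJ')).
  have inc1 : (W + Xs a1 J' <= W + Span J')%MS by rewrite addsmxS // Xs_Span.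
  have eqW : (W + Span J' <= W + Xs a1 J')%MS.
    have := (mxrank_leqif_eq inc1).2; rewrite eqn_leq mxrankS //=.
    have -> : \rank (W + Span J')%MS <= \rank (W + Xs a1 J')%MS.
      by rewrite -(leq_add2r d) (leq_trans tight).
    by move/esym => /andP [].
  set W' := (W + Span J')%MS.
  set K := J :\: J'.
  have cardK : #|K| + #|J'| = #|J|.
    by rewrite -(cardsID J' J) (setIidPr sJ') addnC.
  have ltK : #|K| < N.
    move: nJ'0; rewrite -card_gt0 => p0; move: ltJN; lia.
  have HK : forall K' : {set I}, K' \subset K ->
      \rank W' + #|K'| <= \rank (W' + Span K')%MS + 0.
    move=> K' sK'.
    have dis : J' :&: K' = set0.
      apply/setP => x; rewrite !inE; apply/negP => /andP [h1 h2].
      by move: (subsetP sK' x h2); rewrite inE h1.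
    have cU : #|J' :|: K'| = #|J'| + #|K'| by rewrite cardsU dis cards0 subn0.
    have sU : J' :|: K' \subset J.
      by rewrite subUset sJ' (subset_trans sK') // subsetDl.
    have := H _ sU; rewrite cU.
    have : \rank (W + Span (J' :|: K'))%MS <= \rank (W' + Span K')%MS.
      apply: mxrankS; rewrite addsmx_sub; apply/andP; split.
        by rewrite /W' -addsmxA addsmxSl.
      by apply: submx_trans (Span_U _ _) _; rewrite /W' -addsmxA addsmxSr.
    move: tight; rewrite -/W'; lia.
  have [a2 Ha2] := IH K ltK W' 0 HK.
  exists (fun j => if j \in J' then a1 j else a2 j).
  have : \rank (W' + Xs a2 K)%MS <= \rank (W + Xs (fun j => if j \in J' then a1 j else a2 j) J)%MS.
    apply: mxrankS; rewrite addsmx_sub; apply/andP; split.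
      apply: submx_trans eqW _; rewrite addsmxS //.
      by apply: Xs_sub => // j hj; rewrite hj.
    apply: submx_trans (addsmxSr _ _); apply: Xs_sub; first exact: subsetDl.
    by move=> j; rewrite inE => /andP [/negbTE -> _].
  have := H _ sJ'; rewrite -/W'; move: Ha2 cardK; lia.
rewrite negb_exists => /forallP Hn.
have strict : forall J' : {set I}, J' \subset J -> J' != set0 -> J' != J ->
    \rank W + #|J'| < \rank (W + Span J')%MS + d.
  move=> J' s1 s2 s3; have := Hn J'; rewrite s1 s2 s3 /= -ltnNge.
  by rewrite -(ltn_add2r #|J'|) -addnA addnC; lia.
case/set0Pn: nJ0 => j hj.
set K := J :\ j.
have cardK : #|J| = #|K|.+1 by rewrite (cardsD1 j J) hj.
have ltK : #|K| < N by move: ltJN; lia.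
have sKJ : K \subset J by apply: subsetDl.
have KnJ : forall K' : {set I}, K' \subset K -> K' != J.
  move=> K' sK'; apply/eqP => e; have := subsetP sK' j; rewrite e hj.
  by move/(_ isT); rewrite !inE eqxx.
case: (boolP (Sp j <= W)%MS) => hSp.
  have d1 : 0 < d.
    have := H [set j]; rewrite sub1set hj cards1 => /(_ isT).
    have -> : \rank (W + Span [set j])%MS = \rank W.
      apply/eqP; rewrite eqn_leq rank_addsl andbT mxrankS //.
      by rewrite addsmx_sub submx_refl /Span big_set1.
    lia.
  have HK : forall K' : {set I}, K' \subset K ->
      \rank W + #|K'| <= \rank (W + Span K')%MS + d.-1.
    move=> K' sK'; case: (eqVneq K' set0) => [-> | nK'].
      by rewrite cards0 addn0; apply: leq_trans (rank_addsl _ _) (leq_addr _ _).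
    have := strict K' (subset_trans sK' sKJ) nK' (KnJ _ sK'); lia.
  have [a2 Ha2] := IH K ltK W d.-1 HK.
  exists a2; have : \rank (W + Xs a2 K)%MS <= \rank (W + Xs a2 J)%MS.
    by apply: mxrankS; rewrite addsmxS // Xs_sub.
  move: Ha2; lia.
have [a0 Ha0] := Sp_notsub hSp.
set W' := (W + <<xv a0 j>>)%MS.
have rW' : \rank W' = (\rank W).+1.
  apply/eqP; rewrite eqn_leq; apply/andP; split.
    apply: leq_trans (mxrank_adds_leqif _ _) _.
    by rewrite mxrank_gen; have := rank_leq_row (xv a0 j); lia.
  have := mxrank_leqif_sup (addsmxSl W <<xv a0 j>>%MS).
  rewrite -/W' => /ltn_leqif ->.
  by apply: contra Ha0 => h; apply: submx_trans h; rewrite /W' addsmxSr.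
have HK : forall K' : {set I}, K' \subset K ->
    \rank W' + #|K'| <= \rank (W' + Span K')%MS + d.
  move=> K' sK'; case: (eqVneq K' set0) => [-> | nK'].
    by rewrite cards0 addn0; apply: leq_trans (rank_addsl _ _) (leq_addr _ _).
  have := strict K' (subset_trans sK' sKJ) nK' (KnJ _ sK').
  have : \rank (W + Span K')%MS <= \rank (W' + Span K')%MS.
    by apply: mxrankS; rewrite addsmxS // /W' addsmxSl.
  lia.
have [a2 Ha2] := IH K ltK W' d HK.
exists (fun i => if i == j then a0 j else a2 i).
have : \rank (W' + Xs a2 K)%MS <=
   \rank (W + Xs (fun i => if i == j then a0 j else a2 i) J)%MS.
  apply: mxrankS; rewrite addsmx_sub; apply/andP; split.
    rewrite addsmx_sub addsmxSl /=.
    apply: submx_trans (addsmxSr _ _); apply: (sumsmx_sup j) => //.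
    by rewrite /xv eqxx.
  apply: submx_trans (addsmxSr _ _); apply: Xs_sub => // i.
  by rewrite !inE => /andP [/negbTE -> _].
move: Ha2; rewrite rW' cardK; move: (\rank (W' + Xs a2 K))%MS (\rank (W + Xs _ J))%MS (\rank W) #|K| => p q r s. lia.
Qed.

End Rado.

Section Mx.
Variables (F : fieldType) (k : nat).

Lemma compl_l m m' n (R : 'M[F]_(m', m)) (M : affmx F k m n) v :
  completion (affmulmx_l R M) v = R *m completion M v.
Proof.
rewrite /completion /= mulmxDr mulmx_sumr; congr (_ + _)%R.
by apply: eq_bigr => t _; rewrite scalemxAr.
Qed.

Lemma compl_r m n n' (M : affmx F k m n) (Q : 'M[F]_(n, n')) v :
  completion (affmulmx_r M Q) v = completion M v *m Q.
Proof.
rewrite /completion /= mulmxDl mulmx_suml; congr (_ + _)%R.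
by apply: eq_bigr => t _; rewrite scalemxAl.
Qed.

Lemma compl_sub m n (Rw : {set 'I_m}) (Cl : {set 'I_n}) (M : affmx F k m n) v :
  completion (affsub Rw Cl M) v = mxsub enum_val enum_val (completion M v).
Proof.
apply/matrixP => i j; rewrite /completion /= !mxE !summxE; congr (_ + _)%R.
by apply: eq_bigr => t _; rewrite !mxE.
Qed.

Lemma maxRank_le m n (M : affmx F k m n) : (maxRank M <= minn m n)%N.
Proof.
by apply/bigmax_leqP => i _; rewrite -ltnS ltn_ord.
Qed.

Lemma rank_le_maxRank m n (M : affmx F k m n) v :
  (\rank (completion M v) <= maxRank M)%N.
Proof.
have hr : (\rank (completion M v) < (minn m n).+1)%N.
  by rewrite ltnS leq_min rank_leq_row rank_leq_col.
rewrite /maxRank (bigD1 (Ordinal hr)) /=; first exact: leq_maxl.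
by apply/asboolP; exists v.
Qed.

Lemma maxRank_ub m n (M : affmx F k m n) K :
  (forall v, \rank (completion M v) <= K)%N -> (maxRank M <= K)%N.
Proof.
move=> H; apply/bigmax_leqP => i /asboolP [v <-]; exact: H.
Qed.

Lemma FRmR_of m n (M : affmx F k m n) v : (m <= \rank (completion M v))%N -> FRmR M.
Proof.
move=> h; rewrite /FRmR; apply/eqP; rewrite eqn_leq.
rewrite (leq_trans (maxRank_le M)) ?geq_minl //=.
exact: leq_trans h (rank_le_maxRank M v).
Qed.

Lemma FCmR_of m n (M : affmx F k m n) v : (n <= \rank (completion M v))%N -> FCmR M.
Proof.
move=> h; rewrite /FCmR; apply/eqP; rewrite eqn_leq.
rewrite (leq_trans (maxRank_le M)) ?geq_minr //=.
exact: leq_trans h (rank_le_maxRank M v).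
Qed.

Lemma QFE m n (S : {set 'I_n}) (X : 'M[F]_(m, n)) i p :
  (X *m QF F S) i p = X i (colidx S p).
Proof.
rewrite !mxE (bigD1 (colidx S p)) //= mxE eqxx mulr1 big1 ?addr0 //.
by move=> j /negbTE hj; rewrite mxE hj mulr0.
Qed.

Lemma colidx_lt n (S : {set 'I_n}) (p : 'I_n) : (p < #|S|)%N -> colidx S p \in S.
Proof.
move=> hp; rewrite /colidx nth_cat -cardE hp -mem_enum mem_nth // -cardE //.
Qed.

Lemma colidx_ge n (S : {set 'I_n}) (p : 'I_n) : (#|S| <= p)%N -> colidx S p \notin S.
Proof.
move=> hp; rewrite /colidx nth_cat -cardE ltnNge hp /=.
have : nth p (enum (~: S)) (p - #|S|) \in ~: S.
  rewrite -mem_enum mem_nth // -cardE.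
  have := cardsC S; rewrite card_ord; have := ltn_ord p.
  set t := #|~: S|; lia.
by rewrite inE.
Qed.

Lemma colidx_surj n (S : {set 'I_n}) j : j \in S ->
  exists p : 'I_n, (p < #|S|)%N /\ colidx S p = j.
Proof.
move=> hj.
have hlt : (index j (enum S) < n)%N.
  have h1 : (index j (enum S) < #|S|)%N by rewrite cardE index_mem mem_enum.
  have h2 := max_card (mem S); rewrite card_ord in h2.
  exact: leq_trans h1 h2.
exists (Ordinal hlt); rewrite /= cardE index_mem mem_enum hj; split => //.
by rewrite /colidx nth_cat /= index_mem mem_enum hj nth_index // mem_enum.
Qed.


Lemma pidE m n d (X : 'M[F]_(m, n)) i j :
  (pid_mx d *m X) i j = if (i < d)%N then X i j else 0.
Proof.
rewrite mxE (bigD1 i) //= big1 ?addr0.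
  by rewrite mxE eqxx /=; case: ifP; rewrite ?mul1r ?mul0r.
by move=> l hl; rewrite mxE eq_sym (_ : (l == i :> nat) = false) ?mul0r //; apply: negbTE.
Qed.

Lemma copidE m n d (X : 'M[F]_(m, n)) i j :
  (copid_mx d *m X) i j = if (d <= i)%N then X i j else 0.
Proof.
rewrite /copid_mx mulmxBl mul1mx.
have -> : ((X - pid_mx d *m X) i j = X i j - (pid_mx d *m X) i j)%R by rewrite !mxE.
rewrite pidE.
by case: ltnP; rewrite ?subrr ?subr0.
Qed.

Lemma mulpidE m n s (X : 'M[F]_(m, n)) i p :
  (X *m pid_mx s) i p = if (p < s)%N then X i p else 0.
Proof.
rewrite -[X]trmxK -tr_pid_mx -trmx_mul mxE pidE mxE.
by rewrite trmxK.
Qed.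

Lemma rank_rowsub_ge m n (Rw : {set 'I_m}) (X : 'M[F]_(m, n)) :
  (forall i, i \notin Rw -> row i X = 0) ->
  (\rank X <= \rank (rowsub (fun i : 'I_#|Rw| => enum_val i) X))%N.
Proof.
move=> H; apply: mxrankS; apply/row_subP => i.
case: (boolP (i \in Rw)) => h; last by rewrite H // sub0mx.
by rewrite -(enum_rankK_in h h) -row_rowsub row_sub.
Qed.

Lemma rank_mxsub_le m n m' n' (f : 'I_m' -> 'I_m) (g : 'I_n' -> 'I_n)
  (X : 'M[F]_(m, n)) : (\rank (mxsub f g X) <= \rank X)%N.
Proof.
rewrite mxsubrc; apply: leq_trans (mxrankS (rowsub_sub _ _)) _.
rewrite -mxrank_tr -[in X in (_ <= X)%N]mxrank_tr.
have -> : (colsub g X)^T = rowsub g X^T by apply/matrixP => a b; rewrite !mxE.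
exact: mxrankS (rowsub_sub _ _).
Qed.

Section Block.
Variables (m n d s : nat) (N : 'M[F]_(m, n)).
Hypothesis hd : (d <= m)%N.
Hypothesis Hz : forall (i : 'I_m) (p : 'I_n), (d <= i)%N -> (p < s)%N -> N i p = 0.

Lemma block_ub :
  (\rank N <= d + \rank (mxsub (fun i : 'I_#|[set i : 'I_m | (d <= i)%N]| => enum_val i)
                   (fun p : 'I_#|[set p : 'I_n | (s <= p)%N]| => enum_val p) N))%N.
Proof.
have eN : N = (pid_mx d *m N + copid_mx d *m N)%R.
  by rewrite /copid_mx mulmxBl mul1mx addrC subrK.
have h1a := addmx_sub_adds (submx_refl (pid_mx d *m N)) (submx_refl (copid_mx d *m N)).
rewrite -eN in h1a.
have h1 := leq_trans (mxrankS h1a) (mxrank_adds_leqif _ _).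
have h2 : (\rank ((pid_mx d : 'M[F]_m) *m N) <= d)%N.
  by apply: leq_trans (mxrankM_maxl _ _) _; rewrite rank_pid_mx.
apply: leq_trans h1 _; rewrite leq_add //.
set Rb := [set i : 'I_m | (d <= i)%N].
apply: leq_trans (rank_rowsub_ge (Rw := Rb) _) _.
  move=> i; rewrite inE -ltnNge => hi; apply/rowP => j.
  by rewrite [LHS]mxE copidE leqNgt hi mxE.
have -> : rowsub (fun i : 'I_#|Rb| => enum_val i) (copid_mx d *m N) =
          rowsub (fun i : 'I_#|Rb| => enum_val i) N.
  apply/matrixP => a b; rewrite [LHS]mxE [RHS]mxE copidE.
  by have := enum_valP a; rewrite inE => ->.
rewrite -mxrank_tr.
set Cr := [set p : 'I_n | (s <= p)%N].
apply: leq_trans (rank_rowsub_ge (Rw := Cr) _) _.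
  move=> p; rewrite inE -ltnNge => hp; apply/rowP => a.
  rewrite !mxE Hz //; by have := enum_valP a; rewrite inE.
rewrite -mxrank_tr; apply: eq_leq; congr (\rank _).
by apply/matrixP => a b; rewrite !mxE.
Qed.

Lemma block_lb :
  (\rank (mxsub (fun i : 'I_#|[set i : 'I_m | (i < d)%N]| => enum_val i)
                (fun p : 'I_#|[set p : 'I_n | (p < s)%N]| => enum_val p) N) +
   \rank (mxsub (fun i : 'I_#|[set i : 'I_m | (d <= i)%N]| => enum_val i)
                (fun p : 'I_#|[set p : 'I_n | (s <= p)%N]| => enum_val p) N)
   <= \rank N)%N.
Proof.
set Z := N *m (pid_mx s : 'M[F]_n).
have cZ : copid_mx d *m Z = 0.
  apply/matrixP => i p; rewrite copidE mulpidE mxE.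
  by case: ifP => // h1; case: ifP => // h2; rewrite Hz.
have trc : (copid_mx d : 'M[F]_m)^T = copid_mx d.
  by rewrite /copid_mx linearB /= trmx1 tr_pid_mx.
have hk := mxrank_mul_ker N^T (copid_mx d).
have hZ : (Z^T <= N^T :&: kermx (copid_mx d))%MS.
  rewrite sub_capmx; apply/andP; split.
    by rewrite /Z trmx_mul tr_pid_mx submxMl.
  by apply/sub_kermxP; rewrite -trc -trmx_mul cZ trmx0.
have e1 : \rank (N^T *m copid_mx d) = \rank (copid_mx d *m N).
  by rewrite -mxrank_tr trmx_mul trmxK trc.
rewrite -(mxrank_tr N) -hk e1 addnC leq_add //; last first.
  apply: leq_trans (mxrankS hZ); rewrite mxrank_tr.
  have -> : mxsub (fun i : 'I_#|[set i : 'I_m | (i < d)%N]| => enum_val i)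
                (fun p : 'I_#|[set p : 'I_n | (p < s)%N]| => enum_val p) N =
            mxsub (fun i : 'I_#|[set i : 'I_m | (i < d)%N]| => enum_val i)
                (fun p : 'I_#|[set p : 'I_n | (p < s)%N]| => enum_val p) Z.
    apply/matrixP => a b; rewrite [LHS]mxE [RHS]mxE mulpidE.
    by have := enum_valP b; rewrite inE => ->.
  exact: rank_mxsub_le.
have -> : mxsub (fun i : 'I_#|[set i : 'I_m | (d <= i)%N]| => enum_val i)
                (fun p : 'I_#|[set p : 'I_n | (s <= p)%N]| => enum_val p) N =
          mxsub (fun i : 'I_#|[set i : 'I_m | (d <= i)%N]| => enum_val i)
                (fun p : 'I_#|[set p : 'I_n | (s <= p)%N]| => enum_val p) (copid_mx d *m N).
  apply/matrixP => a b; rewrite [LHS]mxE [RHS]mxE copidE.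
  by have := enum_valP a; rewrite inE => ->.
exact: rank_mxsub_le.
Qed.

End Block.

End Mx.

Section Cards.
Variable F : fieldType.
Lemma card_lt m d : (d <= m)%N -> #|[set i : 'I_m | (i < d)%N]| = d.
Proof.
move=> hd.
have -> : [set i : 'I_m | (i < d)%N] = [set widen_ord hd i | i in 'I_d].
  apply/setP => i; rewrite inE; apply/idP/imsetP => [hi | [j _ ->]].
    by exists (Ordinal hi) => //; apply: val_inj.
  exact: ltn_ord j.
by rewrite card_imset ?card_ord // => a b /(congr1 val) /= h; apply: val_inj.
Qed.

Lemma card_ge m d : (d <= m)%N -> #|[set i : 'I_m | (d <= i)%N]| = (m - d)%N.
Proof.
move=> hd; have := cardsC [set i : 'I_m | (d <= i)%N].
have -> : ~: [set i : 'I_m | (d <= i)%N] = [set i : 'I_m | (i < d)%N].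
  by apply/setP => i; rewrite !inE -ltnNge.
rewrite card_lt // card_ord; lia.
Qed.
End Cards.

Section ACI.
Variables (F : fieldType) (k m n : nat) (M : affmx F k m n).
Hypothesis Haci : is_aci M.

Definition cvec (j : 'I_n) : 'rV[F]_m := (col j (acst M))^T.
Definition Bm (j : 'I_n) : 'M[F]_(k, m) := \matrix_(t, i) acoef M t i j.
Definition wrow (w : 'I_k -> F) : 'rV[F]_k := \row_t w t.

Lemma col_compl w j : (col j (completion M w))^T = cvec j + wrow w *m Bm j.
Proof.
apply/rowP => i; rewrite !mxE summxE; congr (_ + _).
by apply: eq_bigr => t _; rewrite !mxE.
Qed.

Definition owner (t : 'I_k) : option 'I_n := [pick j | [exists i, acoef M t i j != 0]].
Definition glue (a : 'I_n -> 'I_k -> F) : 'I_k -> F :=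
  fun t => if owner t is Some j then a j t else 0.

Lemma col_glue a j : col j (completion M (glue a)) = col j (completion M (a j)).
Proof.
apply/colP => i; rewrite !mxE !summxE; congr (_ + _).
apply: eq_bigr => t _; rewrite !mxE /glue.
case: (eqVneq (acoef M t i j) 0) => [-> | nz]; first by rewrite !mulr0.
rewrite /owner; case: pickP => [j' /existsP [i' h] | none].
  by rewrite (Haci h nz).
by have := none j; rewrite /= => /existsP; case; exists i.
Qed.

Lemma col_dep (v w : 'I_k -> F) j :
  col j (completion M v) = col j (completion M w) ->
  forall (R : 'M[F]_m) (S : {set 'I_n}) i p, colidx S p = j ->
  completion (affmulmx_r (affmulmx_l R M) (QF F S)) v i p =
  completion (affmulmx_r (affmulmx_l R M) (QF F S)) w i p.
Proof.
move=> e R S i p hp; rewrite !compl_r !compl_l !QFE hp.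
have key : forall X : 'M[F]_(m, n), (R *m X) i j = (R *m col j X) i 0.
  by move=> X; rewrite !mxE; apply: eq_bigr => l _; rewrite mxE.
by rewrite !key e.
Qed.

End ACI.

Section More.
Variable F : fieldType.

Lemma colidx_surj_all n (S : {set 'I_n}) j : exists p : 'I_n, colidx S p = j.
Proof.
case: (boolP (j \in S)) => hj; first by have [p [_ ?]] := colidx_surj hj; exists p.
have hjc : j \in enum (~: S) by rewrite mem_enum inE.
have h1 : (index j (enum (~: S)) < #|~: S|)%N by rewrite cardE index_mem.
have h2 := cardsC S; rewrite card_ord in h2.
have hlt : (#|S| + index j (enum (~: S)) < n)%N.
  set a := index _ _ in h1 *; set b := #|~: S| in h1 h2; lia.
exists (Ordinal hlt); rewrite /colidx nth_cat /= -cardE ltnNge leq_addr /=.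
by rewrite addKn nth_index.
Qed.

Lemma rank_QF m n (S : {set 'I_n}) (X : 'M[F]_(m, n)) :
  (\rank X <= \rank (X *m QF F S))%N.
Proof.
rewrite -mxrank_tr -[in X in (_ <= X)%N]mxrank_tr; apply: mxrankS.
apply/row_subP => j; have [p hp] := colidx_surj_all S j.
apply: (eq_row_sub p); apply/rowP => i; rewrite !mxE.
rewrite (bigD1 j) //= mxE -hp eqxx mulr1 big1 ?addr0 // => l /negbTE hl.
by rewrite /QF mxE hl mulr0.
Qed.

Lemma rank_unit_l m n (R : 'M[F]_m) (X : 'M[F]_(m, n)) : R \in unitmx ->
  (\rank X <= \rank (R *m X))%N.
Proof.
move=> hR; rewrite -{1}(mulKmx hR X); exact: mxrankM_maxr.
Qed.

Lemma rank_full_sub m n (Rw : {set 'I_m}) (Cl : {set 'I_n}) (X : 'M[F]_(m, n)) :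
  (forall i, i \in Rw) -> (forall j, j \in Cl) ->
  (\rank X <= \rank (mxsub (fun i : 'I_#|Rw| => enum_val i)
                           (fun j : 'I_#|Cl| => enum_val j) X))%N.
Proof.
move=> hR hC; apply: leq_trans (rank_rowsub_ge (Rw := Rw) _) _.
  by move=> i; rewrite hR.
rewrite -mxrank_tr; apply: leq_trans (rank_rowsub_ge (Rw := Cl) _) _.
  by move=> j; rewrite hC.
rewrite -mxrank_tr; apply: eq_leq; congr (\rank _).
by apply/matrixP => a b; rewrite !mxE.
Qed.

Lemma zero_coord m (U : 'M[F]_m) (u : 'rV[F]_m) (i : 'I_m) :
  (u <= U)%MS -> (\rank U <= i)%N -> (u *m invmx (row_ebase U)) 0 i = 0.
Proof.
move=> hu hi; move: hu; rewrite -(eq_row_base U) => /submxP [D ->].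
rewrite /row_base -mulmxA mulmxK ?row_ebase_unit //.
rewrite mxE big1 // => l _; rewrite mxE.
case: eqP => [e|]; last by rewrite mulr0.
by rewrite e ltnNge hi mulr0.
Qed.

Lemma zero_entry_compl k m n (M : affmx F k m n) i p v :
  zero_entry M i p -> completion M v i p = 0.
Proof.
case=> h1 h2; rewrite /completion !mxE h1 add0r summxE big1 // => t _.
by rewrite mxE h2 mulr0.
Qed.

Lemma maxRank_attained k m n (M : affmx F k m n) :
  exists v, \rank (completion M v) = maxRank M.
Proof.
have hr : (\rank (completion M (fun _ => 0%R)) < (minn m n).+1)%N.
  by rewrite ltnS leq_min rank_leq_row rank_leq_col.
set P := fun r : 'I_(minn m n).+1 => `[< exists v, \rank (completion M v) = r >].
have P0 : P (Ordinal hr) by apply/asboolP; exists (fun _ => 0%R).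
rewrite /maxRank (bigmax_eq_arg _ P0).
case: arg_maxnP => // i /asboolP [v hv] _; by exists v.
Qed.

End More.

Section Main.
Variables (F : fieldType) (k m n : nat) (M : affmx F k m n).

Lemma factor_notFmR S : factor_set M S -> ~ FmR M.
Proof.
case=> R [hR]; set M' := affmulmx_r _ _ => -[r [hr [hc [hz [_ hC]]]]] hF.
have hS : (#|S| <= n)%N by have := max_card (mem S); rewrite card_ord.
have ub : (maxRank M <= (m - r) + (n - #|S|))%N.
  apply: maxRank_ub => v.
  have h1 : (\rank (completion M v) <= \rank (completion M' v))%N.
    rewrite /M' compl_r compl_l.
    exact: leq_trans (rank_unit_l _ hR) (rank_QF _ _).
  apply: leq_trans h1 _.
  have := @block_ub F m n (m - r) #|S| (completion M' v) (leq_subr _ _).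
  move=> /(_ (fun i p hi hp => zero_entry_compl v (hz i p hi hp))) h2.
  apply: leq_trans h2 _; rewrite leq_add2l.
  apply: leq_trans (rank_leq_col _) _.
  by rewrite card_ge.
move: hF ub hc; rewrite /FmR => ->.
move: (maxRank M) => x; lia.
Qed.

Lemma FmR_semifactor : FmR M -> exists S, semifactor_set M S.
Proof.
move=> hF; case: (leqP n m) => hmn.
  exists set0; exists 1%:M; split; first exact: unitmx1.
  set M' := affmulmx_r _ _.
  exists m; split => //; split; first by rewrite cards0 addn0; lia.
  split; first by move=> i p _; rewrite cards0.
  split.
    apply: (@FRmR_of _ _ _ _ _ (fun _ => 0)).
    by apply: (@leq_trans 0%N) => //; rewrite (card_lt (leq_subr _ _)) subnn.
  have [v hv] := maxRank_attained M.
  apply: (@FCmR_of _ _ _ _ _ v).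
  rewrite compl_sub.
  have Hz : forall (i : 'I_m) (p : 'I_n), (m - m <= i)%N -> (p < #|(set0 : {set 'I_n})|)%N ->
      completion M' v i p = 0 by move=> i p _; rewrite cards0.
  have h2 := @block_ub F m n (m - m) #|(set0 : {set 'I_n})| (completion M' v) (leq_subr _ _) Hz.
  have h1 : (\rank (completion M v) <= \rank (completion M' v))%N.
    rewrite /M' compl_r compl_l.
    exact: leq_trans (rank_unit_l _ (unitmx1 _ _)) (rank_QF _ _).
  have e : #|[set p : 'I_n | (#|(set0 : {set 'I_n})| <= p)%N]| = n.
    have -> : [set p : 'I_n | (#|(set0 : {set 'I_n})| <= p)%N] = setT.
      by apply/setP => p; rewrite !inE cards0.
    by rewrite cardsT card_ord.
  move: hF; rewrite /FmR -hv => hF.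
  apply: (@leq_trans n); first by rewrite e.
  have h3 := leq_trans h1 h2; rewrite hF in h3.
  move: h3; move: (\rank (mxsub _ _ (completion M' v))) => x.
  rewrite subnn add0n; lia.
exists setT; exists 1%:M; split; first exact: unitmx1.
set M' := affmulmx_r _ _.
exists 0%N; split => //; split; first by rewrite cardsT card_ord add0n; lia.
split; first by move=> i p; rewrite subn0 leqNgt ltn_ord.
split; last first.
  apply: (@FCmR_of _ _ _ _ _ (fun _ => 0)).
  apply: (@leq_trans 0%N) => //.
  by rewrite cardsT card_ord card_ge ?subnn.
have [v hv] := maxRank_attained M.
apply: (@FRmR_of _ _ _ _ _ v).
rewrite compl_sub.
have h1 : (\rank (completion M v) <= \rank (completion M' v))%N.
  rewrite /M' compl_r compl_l.
  exact: leq_trans (rank_unit_l _ (unitmx1 _ _)) (rank_QF _ _).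
have h2 := @rank_full_sub F m n [set i : 'I_m | (i < m - 0)%N]
   [set p : 'I_n | (p < #|[set: 'I_n]|)%N] (completion M' v).
apply: (@leq_trans m); first by rewrite card_lt ?subn0.
apply: leq_trans (h2 _ _); last first.
- by move=> j; rewrite inE cardsT card_ord ltn_ord.
- by move=> i; rewrite inE subn0 ltn_ord.
apply: leq_trans h1; move: hF; rewrite /FmR -hv => ->; lia.
Qed.


Lemma semifactor_FmR S : is_aci M -> semifactor_set M S -> FmR M.
Proof.
move=> Haci; case=> R [hR]; set M' := affmulmx_r _ _ => -[r [hr [hc [hz [hA hC]]]]].
have hS : (#|S| <= n)%N by have := max_card (mem S); rewrite card_ord.
have [vA hvA] := maxRank_attained (affsub [set i : 'I_m | (i < m - r)%N]
    [set p : 'I_n | (p < #|S|)%N] M').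
have [vC hvC] := maxRank_attained (affsub [set i : 'I_m | (m - r <= i)%N]
    [set p : 'I_n | (#|S| <= p)%N] M').
rewrite hA in hvA; rewrite hC in hvC.
set v := glue M (fun j => if j \in S then vA else vC).
have Hz : forall (i : 'I_m) (p : 'I_n), (m - r <= i)%N -> (p < #|S|)%N ->
    completion M' v i p = 0.
  by move=> i p hi hp; apply: zero_entry_compl; apply: hz.
have hb := @block_lb F m n (m - r) #|S| (completion M' v) Hz.
rewrite !compl_sub in hvA hvC.
have eA : mxsub (fun i : 'I_#|[set i : 'I_m | (i < m - r)%N]| => enum_val i)
    (fun p : 'I_#|[set p : 'I_n | (p < #|S|)%N]| => enum_val p) (completion M' v)
  = mxsub enum_val enum_val (completion M' vA).
  apply/matrixP => a b; rewrite [LHS]mxE [RHS]mxE.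
  have hb' := enum_valP b; rewrite inE in hb'.
  apply: (col_dep (j := colidx S (enum_val b))) => //.
  by rewrite col_glue // colidx_lt.
have eC : mxsub (fun i : 'I_#|[set i : 'I_m | (m - r <= i)%N]| => enum_val i)
    (fun p : 'I_#|[set p : 'I_n | (#|S| <= p)%N]| => enum_val p) (completion M' v)
  = mxsub enum_val enum_val (completion M' vC).
  apply/matrixP => a b; rewrite [LHS]mxE [RHS]mxE.
  have hb' := enum_valP b; rewrite inE in hb'.
  apply: (col_dep (j := colidx S (enum_val b))) => //.
  by rewrite col_glue // (negbTE (colidx_ge hb')).
rewrite eA eC hvA hvC card_lt ?leq_subr // card_ge // in hb.
have h1 : (\rank (completion M' v) <= \rank (completion M v))%N.
  rewrite /M' compl_r compl_l.
  exact: leq_trans (mxrankM_maxl _ _) (mxrankM_maxr _ _).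
have h2 := rank_le_maxRank M v.
have h3 := maxRank_le M.
rewrite /FmR; apply/eqP; rewrite eqn_leq h3 /=.
move: hb h1 h2 hc; move: (maxRank M) (\rank (completion M v)) (\rank (completion M' v)) => x y z.
lia.
Qed.


Lemma Rentry (E : 'M[F]_m) n' (X : 'M[F]_(m, n')) i j :
  ((invmx E)^T *m X) i j = ((col j X)^T *m invmx E) 0 i.
Proof. by rewrite !mxE; apply: eq_bigr => l _; rewrite !mxE mulrC. Qed.

Lemma cvec_Sp j : (cvec M j <= Sp (cvec M) (Bm M) j)%MS.
Proof. by rewrite /Sp genmxE -addsmxE addsmxSl. Qed.

Lemma rowB_Sp t j : ((col j (acoef M t))^T <= Sp (cvec M) (Bm M) j)%MS.
Proof.
have -> : (col j (acoef M t))^T = row t (Bm M j) by apply/rowP => i; rewrite !mxE.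
by rewrite /Sp genmxE -addsmxE (submx_trans (row_sub _ _)) ?addsmxSr.
Qed.

Lemma notFmR_factor : is_aci M -> ~ FmR M -> exists S, factor_set M S.
Proof.
move=> Haci hF.
pose c := cvec M; pose B := Bm M.
pose h (S : {set 'I_n}) := (\rank (Span c B S) + n - #|S|)%N.
have [S0 _ HS] := @arg_minnP _ set0 xpredT h isT.
have cardn : forall J : {set 'I_n}, (#|J| <= n)%N.
  by move=> J; have := max_card (mem J); rewrite card_ord.
set U := Span c B S0.
set r0 := \rank U.
have r0m : (r0 <= m)%N by apply: rank_leq_col.
have hr0 : (r0 <= #|S0|)%N.
  have := HS set0 isT; rewrite /h cards0 subn0 /Span big_set0 mxrank0 -/U -/r0.
  have := cardn S0; lia.
have HA : forall J' : {set 'I_n}, J' \subset S0 ->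
    (\rank (0%R : 'M[F]_m) + #|J'| <= \rank ((0%R : 'M[F]_m) + Span c B J')%MS + (#|S0| - r0))%N.
  move=> J' sJ'.
  have := HS J' isT; rewrite /h mxrank0 adds0mx_id -/U -/r0.
  have := cardn J'; have := cardn S0.
  move: (\rank (Span c B J')) => x; lia.
have [a1 Ha1] := @rado_ind F m k _ c B #|S0|.+1 S0 (ltnSn _) 0%R (#|S0| - r0)%N HA.
have hU1 : (U <= Xs c B a1 S0)%MS.
  have hsub : (Xs c B a1 S0 <= U)%MS by apply: Xs_Span.
  have := (mxrank_leqif_eq hsub).2; rewrite eqn_leq mxrankS //=.
  have -> : (\rank U <= \rank (Xs c B a1 S0))%N.
    move: Ha1; rewrite mxrank0 adds0mx_id -/r0.
    move: (\rank (Xs c B a1 S0)) => x; move: hr0; clear; move: #|S0| => s1; lia.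
  by move/esym/andP => [].
have HB : forall K : {set 'I_n}, K \subset ~: S0 ->
    (\rank U + #|K| <= \rank (U + Span c B K)%MS + 0)%N.
  { move=> K sK. have dis : S0 :&: K = set0.
         apply/setP => x; rewrite !inE; apply/negP => /andP [h1 h2].
         by move: (subsetP sK x h2); rewrite inE h1.
       have cU : #|S0 :|: K| = (#|S0| + #|K|)%N by rewrite cardsU dis cards0 subn0.
       have := HS (S0 :|: K) isT; rewrite /h cU -/U -/r0.
       have hsp : (\rank (Span c B (S0 :|: K)) <= \rank (U + Span c B K))%N.
         exact: mxrankS (Span_U _ _ _ _).
       have := cardn (S0 :|: K); rewrite cU.
       move: hsp; move: (\rank (Span c B (S0 :|: K))) (\rank (U + Span c B K))%MS => x y.
       lia. }
have [a2 Ha2] := @rado_ind F m k _ c B #|~: S0|.+1 (~: S0) (ltnSn _) U 0%N HB.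
pose a := fun j => if j \in S0 then a1 j else a2 j.
pose v := glue M (fun j t => a j 0 t).
set N0 := completion M v.
have colN0 : forall j, (col j N0)^T = xv c B a j.
  move=> j; rewrite /N0 /v col_glue // col_compl.
  by congr (_ + _ *m _); apply/rowP => t; rewrite !mxE.
have XsN0 : forall J, (Xs c B a J <= N0^T)%MS.
  move=> J; apply/sumsmx_subP => j _; rewrite genmxE -colN0 tr_col row_sub //.
have rN0 : (r0 + (n - #|S0|) <= \rank N0)%N.
  have := cardsC S0; rewrite card_ord => e.
  have -> : (n - #|S0|)%N = #|~: S0| by lia.
  rewrite addn0 in Ha2; apply: leq_trans Ha2 _.
  rewrite -[\rank N0]mxrank_tr; apply: mxrankS; rewrite addsmx_sub; apply/andP; split.
    apply: submx_trans hU1 _; apply: submx_trans (XsN0 S0).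
    by apply: Xs_sub => // j hj; rewrite /a hj.
  apply: submx_trans (XsN0 (~: S0)).
  by apply: Xs_sub => // j; rewrite inE => /negbTE hj; rewrite /a hj.
have hlt : (r0 + (n - #|S0|) < minn m n)%N.
  have h1 := rank_le_maxRank M v; have h2 := maxRank_le M.
  move: hF; rewrite /FmR -/N0 => hF.
  have : maxRank M != minn m n by apply/eqP.
  move: h1 h2 rN0; move: (maxRank M) (\rank N0) => x y; lia.
set E := row_ebase U.
set R := (invmx E)^T.
have hR : R \in unitmx by rewrite unitmx_tr unitmx_inv row_ebase_unit.
exists S0; exists R; split => //.
set M' := affmulmx_r _ _.
have mr : (m - (m - r0) = r0)%N by rewrite subKn.
have hz : forall (i : 'I_m) (p : 'I_n), (m - (m - r0) <= i)%N -> (p < #|S0|)%N ->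
    zero_entry M' i p.
  move=> i p; rewrite mr => hi hp.
  have hj := colidx_lt hp.
  have hSp : (Sp c B (colidx S0 p) <= U)%MS by apply: (sumsmx_sup (colidx S0 p)).
  split => /=; first by rewrite QFE Rentry zero_coord // (submx_trans (cvec_Sp _)).
  by move=> t; rewrite QFE Rentry zero_coord // (submx_trans (rowB_Sp _ _)).
exists (m - r0)%N; split; first exact: leq_subr.
split; first by move: hlt (cardn S0) r0m; lia.
split => //.
have Hz : forall (i : 'I_m) (p : 'I_n), (m - (m - r0) <= i)%N -> (p < #|S0|)%N ->
    completion M' v i p = 0.
  by move=> i p hi hp; apply: zero_entry_compl; apply: hz.
have eN : completion M' v = R *m N0 *m QF F S0 by rewrite /M' compl_r compl_l.
split.
  apply: (@FRmR_of _ _ _ _ _ v); rewrite compl_sub.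
  apply: (@leq_trans r0); first by rewrite card_lt ?leq_subr // mr.
  set N := completion M' v.
  set Nl := colsub (fun b : 'I_#|[set p : 'I_n | (p < #|S0|)%N]| => enum_val b) N.
  have -> : mxsub (fun i : 'I_#|[set i : 'I_m | (i < m - (m - r0))%N]| => enum_val i)
     (fun b : 'I_#|[set p : 'I_n | (p < #|S0|)%N]| => enum_val b) N =
     rowsub (fun i : 'I_#|[set i : 'I_m | (i < m - (m - r0))%N]| => enum_val i) Nl.
    by apply/matrixP => a' b; rewrite !mxE.
  apply: leq_trans (rank_rowsub_ge _) => //; last first.
    move=> i; rewrite inE -leqNgt => hi; apply/rowP => b; rewrite [LHS]mxE [RHS]mxE [LHS]mxE.
    apply: Hz => //; by have := enum_valP b; rewrite inE.
  have hUN : (U <= Nl^T *m E)%MS.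
    apply: submx_trans hU1 _; apply/sumsmx_subP => j hj; rewrite genmxE.
    have [p [hp hpj]] := colidx_surj hj.
    have hpC : p \in [set p : 'I_n | (p < #|S0|)%N] by rewrite inE.
    apply: (eq_row_sub (enum_rank_in hpC p)).
    rewrite row_mul -tr_col col_colsub enum_rankK_in // /N eN.
    have -> : (col p (R *m N0 *m QF F S0))^T = (col j N0)^T *m invmx E.
      by apply/rowP => i; rewrite [LHS]mxE [LHS]mxE QFE Rentry hpj.
    by rewrite mulmxKV ?row_ebase_unit // colN0 /xv /a hj.
  apply: leq_trans (mxrankS hUN) _; apply: leq_trans (mxrankM_maxl _ _) _.
  by rewrite mxrank_tr.
apply: (@FCmR_of _ _ _ _ _ v); rewrite compl_sub.
apply: (@leq_trans (n - #|S0|)); first by rewrite card_ge.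
have hb := @block_ub F m n (m - (m - r0)) #|S0| (completion M' v) (leq_subr _ _) Hz.
have h1 : (\rank N0 <= \rank (completion M' v))%N.
  by rewrite eN; apply: leq_trans (rank_unit_l _ hR) (rank_QF _ _).
move: hb h1 rN0; rewrite mr.
move: (\rank (mxsub _ _ (completion M' v))) (\rank (completion M' v)) (\rank N0) => x y z.
lia.
Qed.

End Main.

Local Close Scope ring_scope.

Theorem proposition3p4 (F : fieldType) (k m n : nat) (M : affmx F k m n) :
  is_aci M ->
  ((exists S : {set 'I_n}, factor_set M S) <-> ~ FmR M) /\
  ((exists S : {set 'I_n}, semifactor_set M S) <-> FmR M).
Proof.
move=> Haci; split; split.
- by case=> S; apply: factor_notFmR.
- exact: notFmR_factor.
- by case=> S; apply: semifactor_FmR.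
- exact: FmR_semifactor.
Qed.
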